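(* If $P$ is a finite poset, then the interval monoid $\mathcal{M}(P)$ embeds into a finitely generated free monoid.
   Context: For a poset $P$, the interval monoid $\mathcal{M}(P)$ is the monoid presented by generators $[x,y]$ for $x\le y$ in $P$ and relations $[x,x]=1$ ($x\in P$) and $[x,z]=[x,y][y,z]$ whenever $x\le y\le z$. *)

(* Defs.v *)
From HB Require Import structures.
From mathcomp Require Import all_boot all_order.
Set Implicit Arguments. Unset Strict Implicit. Unset Printing Implicit Defensive.
Import Order.Theory.
Local Open Scope order_scope.

(* Generators [x,y] of the interval monoid: pairs x <= y in P. *)
Definition igen (d : Order.disp_t) (P : finPOrderType d) : Type :=
  {p : P * P | p.1 <= p.2}.

Inductive irel (d : Order.disp_t) (P : finPOrderType d) :
    seq (igen P) -> seq (igen P) -> Prop :=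
  | irel_id (x : P) (hxx : x <= x) :
      irel [:: exist _ (x, x) hxx] [::]
  | irel_comp (x y z : P) (hxy : x <= y) (hyz : y <= z) (hxz : x <= z) :
      irel [:: exist _ (x, z) hxz] [:: exist _ (x, y) hxy; exist _ (y, z) hyz].

(* The monoid congruence on words generated by the relations;
   M(P) is the quotient of the free monoid seq (igen P) by it. *)
Inductive icong (d : Order.disp_t) (P : finPOrderType d) :
    seq (igen P) -> seq (igen P) -> Prop :=
  | icong_rel u v : irel u v -> icong u v
  | icong_refl u : icong u u
  | icong_sym u v : icong u v -> icong v u
  | icong_trans u v w : icong u v -> icong v w -> icong u w
  | icong_ctx a b u v : icong u v -> icong (a ++ u ++ b) (a ++ v ++ b).

(* A monoid map M(P) -> A^* (A^* = seq A, the free monoid on A) is given by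
   images of the generators; phi respects the relations iff it induces a
   well-defined homomorphism, and the induced map is injective iff words with
   equal image are congruent.  Both are captured by the equivalence below. *)
Definition interval_monoid_embeds_via (d : Order.disp_t) (P : finPOrderType d)
    (A : Type) (phi : igen P -> seq A) : Prop :=
  forall u v : seq (igen P),
    icong u v <-> flatten (map phi u) = flatten (map phi v).

(* Main.v *)
Require Import Defs.
From HB Require Import structures.
From mathcomp Require Import all_boot all_order.
From mathcomp Require Import zify.
Set Implicit Arguments. Unset Strict Implicit. Unset Printing Implicit Defensive.
Import Order.Theory.

Definition hh d (P : finPOrderType d) (x : P) : nat :=
  #|[set w : P | (w <= x)%O]| * #|P| + enum_rank x.

Lemma hh_lt d (P : finPOrderType d) (x y : P) : (x < y)%O -> hh x < hh y.
Proof.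
move=> xy.
have H : [set w : P | (w <= x)%O] \proper [set w : P | (w <= y)%O].
  apply/properP; split.
    apply/subsetP => w; rewrite !inE => wx; exact: le_trans wx (ltW xy).
  by exists y; rewrite !inE ?lexx ?(lt_geF xy).
have := proper_card H.
have r1 := ltn_ord (enum_rank x). have r2 := ltn_ord (enum_rank y).
rewrite /hh. move: (nat_of_ord (enum_rank x)) (nat_of_ord (enum_rank y)) r1 r2 => r s r1 r2.
move: (#|[set w : P | (w <= x)%O]|) (#|[set w : P | (w <= y)%O]|) (#|P|) r1 r2 => a b n r1 r2 ab.
nia.
Qed.

Lemma hh_le d (P : finPOrderType d) (x y : P) : (x <= y)%O -> hh x <= hh y.
Proof.
rewrite le_eqVlt => /orP [/eqP -> // | /hh_lt]; exact: ltnW.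
Qed.

Lemma hh_inj d (P : finPOrderType d) : injective (@hh d P).
Proof.
move=> x y /(congr1 (modn^~ #|P|)).
rewrite /hh !modnMDl !modn_small ?ltn_ord // => e.
by apply: enum_rank_inj; apply: ord_inj.
Qed.

Lemma hh_bound d (P : finPOrderType d) (x : P) : hh x < #|P|.+1 * #|P|.
Proof.
have r1 := ltn_ord (enum_rank x).
have c := max_card [set w : P | (w <= x)%O].
rewrite /hh. move: (nat_of_ord (enum_rank x)) r1 => r r1.
move: (#|[set w : P | (w <= x)%O]|) (#|P|) c r1 => a n c r1. nia.
Qed.

Definition psi d (P : finPOrderType d) (g : igen P) : seq nat :=
  iota (hh (val g).1) (hh (val g).2 - hh (val g).1).

Definition img d (P : finPOrderType d) (u : seq (igen P)) : seq nat :=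
  flatten (map (@psi d P) u).

Lemma img_cat d (P : finPOrderType d) (u v : seq (igen P)) :
  img (u ++ v) = img u ++ img v.
Proof. by rewrite /img map_cat flatten_cat. Qed.

Lemma img_cons d (P : finPOrderType d) g (u : seq (igen P)) :
  img (g :: u) = psi g ++ img u.
Proof. by []. Qed.

Lemma sound d (P : finPOrderType d) (u v : seq (igen P)) :
  icong u v -> img u = img v.
Proof.
elim=> {u v}.
- move=> u v [].
  + by move=> x hxx; rewrite /img /= /psi /= subnn.
  + move=> x y z hxy hyz hxz; rewrite /img /= /psi /= !cats0.
    have a := hh_le hxy; have b := hh_le hyz.
    have -> : hh z - hh x = (hh y - hh x) + (hh z - hh y) by lia.
    rewrite iotaD; congr (_ ++ iota _ _); lia.
- by [].
- by move=> u v _ ->.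
- by move=> u v w _ -> _ ->.
- by move=> a b u v _ e; rewrite !img_cat e.
Qed.

Definition triv d (P : finPOrderType d) (g : igen P) := (val g).1 == (val g).2.

Definition consr d (P : finPOrderType d) (g : igen P) (w : seq (igen P)) :=
  if triv g then w else
  match w with
  | g' :: w' => if (val g).2 == (val g').1
                then insubd g ((val g).1, (val g').2) :: w' else g :: w
  | [::] => [:: g]
  end.

Definition red d (P : finPOrderType d) (u : seq (igen P)) := foldr (@consr d P) [::] u.

Lemma icong_consr d (P : finPOrderType d) g (w : seq (igen P)) :
  icong (g :: w) (consr g w).
Proof.
rewrite /consr /triv; case: g => [[x y] hxy] /=.
case: eqP => [exy | nxy].
  subst y.
  have := icong_ctx [::] w (icong_rel (irel_id hxy)); by rewrite /= .
case: w => [|[[y' z] hyz] w'] /=; first exact: icong_refl.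
case: eqP => [e | _]; last exact: icong_refl.
simpl in e; subst y'.
have hxz : (x <= z)%O by exact: le_trans hxy hyz.
have -> : insubd (exist _ (x, y) hxy) (x, z) = exist _ (x, z) hxz :> igen P.
  by apply: val_inj; rewrite /= insubdK.
apply: icong_sym.
have := icong_ctx [::] w' (icong_rel (irel_comp hxy hyz hxz)); by rewrite /=.
Qed.

Lemma icong_red d (P : finPOrderType d) (u : seq (igen P)) : icong u (red u).
Proof.
elim: u => [|g u IH] /=; first exact: icong_refl.
apply: icong_trans (icong_consr g (red u)).
have := icong_ctx [:: g] [::] IH; by rewrite /= !cats0.
Qed.

Fixpoint reduced d (P : finPOrderType d) (w : seq (igen P)) : bool :=
  match w with
  | [::] => true
  | g :: w' => [&& ~~ triv g,
                 match w' with g' :: _ => (val g).2 != (val g').1 | [::] => true end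
               & reduced w']
  end.

Lemma reduced_consr d (P : finPOrderType d) g (w : seq (igen P)) :
  reduced w -> reduced (consr g w).
Proof.
rewrite /consr; case: ifP => // ntg.
case: w => [|g' w'] /=; first by rewrite ntg.
case: eqP => [e | ne] /=; last first.
  by move=> ->; rewrite ntg andbT; apply/eqP.
case/and3P => ntg' h r.
rewrite insubdK; last first.
  have := valP g'; rewrite /= -e => h'; exact: le_trans (valP g) h'.
apply/and3P; split => //=.
  move: ntg ntg'; rewrite /triv /= insubdK; last first.
    have := valP g'; rewrite /= -e => h'; exact: le_trans (valP g) h'.
  move=> /eqP n1 /eqP n2; apply/eqP => /= exz.
  apply: n1; apply: le_anti; rewrite (valP g) /= exz e.
  exact: (valP g').
Qed.

Lemma reduced_red d (P : finPOrderType d) (u : seq (igen P)) : reduced (red u).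
Proof. by elim: u => //= g u IH; apply: reduced_consr. Qed.

Fixpoint run (a : nat) (w : seq nat) : nat :=
  if w is b :: w' then (if b == a then (run a.+1 w').+1 else 0) else 0.

Lemma run_iota a L r : run a (iota a L ++ r) = L + run (a + L) r.
Proof.
elim: L a => [|L IH] a /=; first by rewrite addn0.
by rewrite eqxx IH addSnnS.
Qed.

Lemma nontriv_lt d (P : finPOrderType d) (g : igen P) :
  ~~ triv g -> hh (val g).1 < hh (val g).2.
Proof.
move=> nt; apply: hh_lt; rewrite lt_neqAle (valP g) andbT; exact: nt.
Qed.

Lemma psi_head d (P : finPOrderType d) (g : igen P) r :
  ~~ triv g -> exists t, psi g ++ r = hh (val g).1 :: t.
Proof.
move=> /nontriv_lt lt; rewrite /psi.
have -> : hh (val g).2 - hh (val g).1 = (hh (val g).2 - hh (val g).1).-1.+1 by lia.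
by eexists.
Qed.

Lemma run_tail d (P : finPOrderType d) g (u : seq (igen P)) :
  reduced (g :: u) -> run (hh (val g).2) (img u) = 0.
Proof.
case: u => [|g' u] //= /and4P [_ ne ntg' _].
rewrite img_cons; have [t ->] := psi_head (img u) ntg'.
rewrite /=; case: eqP => // /hh_inj e; by rewrite e eqxx in ne.
Qed.

Lemma reduced_inj d (P : finPOrderType d) (u v : seq (igen P)) :
  reduced u -> reduced v -> img u = img v -> u = v.
Proof.
elim: u v => [|g u IH] [|k v] //.
- move=> _ /= /and3P [ntk _ _]; rewrite img_cons.
  by have [t ->] := psi_head (img v) ntk.
- move=> /= /and3P [ntg _ _] _; rewrite img_cons.
  by have [t ->] := psi_head (img u) ntg.
move=> ru rv e.
have ru' := ru; have rv' := rv.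
move: ru rv => /= /and3P [ntg _ ru] /and3P [ntk _ rv].
move: e; rewrite !img_cons => e.
have h1 : hh (val g).1 = hh (val k).1.
  have [t1 e1] := psi_head (img u) ntg; have [t2 e2] := psi_head (img v) ntk.
  by move: e; rewrite e1 e2 => -[].
have lg := nontriv_lt ntg; have lk := nontriv_lt ntk.
have h2 : hh (val g).2 = hh (val k).2.
  have := congr1 (run (hh (val g).1)) e.
  rewrite {1}/psi run_iota h1 /psi run_iota.
  have -> : hh (val k).1 + (hh (val g).2 - hh (val k).1) = hh (val g).2 by lia.
  have -> : hh (val k).1 + (hh (val k).2 - hh (val k).1) = hh (val k).2 by lia.
  rewrite (run_tail ru') (run_tail rv'); lia.
have gk : g = k.
  apply: val_inj; case: (val g) h1 h2 => a b; case: (val k) => a' b' /=.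
  by move=> /hh_inj -> /hh_inj ->.
subst k; congr (_ :: _); apply: IH => //.
have := congr1 (drop (size (psi g))) e; by rewrite !drop_size_cat.
Qed.

Theorem proposition8p2 (d : Order.disp_t) (P : finPOrderType d) :
  exists (A : finType) (phi : igen P -> seq A), interval_monoid_embeds_via phi.
Proof.
set B := #|P|.+1 * #|P|.
exists 'I_B.+1, (fun g => map inord (psi g)) => u v.
have fl : forall w : seq (igen P),
    flatten (map (fun g => map (@inord B) (psi g)) w) = map inord (img w).
  by move=> w; rewrite /img map_flatten -map_comp.
have bnd : forall w : seq (igen P), all (fun k => k <= B) (img w).
  move=> w; apply/allP => k /flattenP [s /mapP [g _ ->]].
  rewrite /psi mem_iota => /andP [_ h].
  have := hh_bound (val g).2; have := hh_le (valP g). rewrite /B => ab bB.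
  rewrite (subnKC ab) in h; exact: ltnW (ltn_trans h bB).
have inj : forall w1 w2 : seq (igen P),
    map (@inord B) (img w1) = map inord (img w2) -> img w1 = img w2.
  have mv : forall w : seq (igen P), map (val \o (@inord B)) (img w) = img w.
    move=> w; rewrite -{2}(map_id (img w)); apply/eq_in_map.
    by move=> k /(allP (bnd w)) /= kb; rewrite inordK.
  by move=> w1 w2 /(congr1 (map val)); rewrite -!map_comp !mv.
rewrite !fl; split.
  by move/sound ->.
move/inj => e.
apply: icong_trans (icong_red u) _.
apply: icong_sym; apply: icong_trans (icong_red v) _.
have -> : red v = red u; last exact: icong_refl.
apply: reduced_inj; rewrite ?reduced_red //.
by rewrite -(sound (icong_red u)) -(sound (icong_red v)).
Qed.
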